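(* For any integers $n\ge1$ and $\lambda\ge1$, the minimum cost of a solution of the TBI problem with time bound $\lambda$ on a path with $n$ nodes all of which have threshold $1$ is $\lceil n/(2\lambda+1)\rceil$.
   Context: Influence model: a network is a graph $G=(V,E)$; $N(v)$ is the neighbourhood of $v$. Thresholds $t:V\to\{1,2,\dots\}$. An incentive function is $p:V\to\{0,1,2,\dots\}$ with $0\le p(v)\le t(v)$, of cost $\sum_v p(v)$. The influence process: $\mathsf{Influenced}[p,0]=\{v: p(v)=t(v)\}$ and, for $\ell>0$, $\mathsf{Influenced}[p,\ell]=\mathsf{Influenced}[p,\ell-1]\cup\{v: |N(v)\cap \mathsf{Influenced}[p,\ell-1]|\ge t(v)-p(v)\}$. The TBI problem with time bound $\lambda$: find $p$ of minimum cost with $\mathsf{Influenced}[p,\lambda]=V$. A path on $n$ nodes has nodes $0,\dots,n-1$ and edges $\{i,i+1\}$, $0\le i\le n-2$. *)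

(* Defs.v *)
From mathcomp Require Import all_boot.
Set Implicit Arguments. Unset Strict Implicit. Unset Printing Implicit Defensive.

Definition path_adj (n : nat) : rel 'I_n :=
  fun i j => (i.+1 == j :> nat) || (j.+1 == i :> nat).

Definition nbhd (T : finType) (adj : rel T) (v : T) : {set T} := [set u | adj v u].

Fixpoint influenced (T : finType) (adj : rel T) (t p : T -> nat) (l : nat)
  : {set T} :=
  match l with
  | 0 => [set v | p v == t v]
  | l'.+1 =>
      let I := influenced adj t p l' in
      I :|: [set v | t v - p v <= #|nbhd adj v :&: I|]
  end.

Definition incentive (T : finType) (t p : T -> nat) : Prop := forall v, p v <= t v.

Definition cost (T : finType) (p : {ffun T -> nat}) : nat := \sum_(v : T) p v.

Definition TBI_solution (T : finType) (adj : rel T) (t : T -> nat) (lam : nat)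
  (p : {ffun T -> nat}) : Prop :=
  incentive t p /\ influenced adj t p lam = [set: T].

Definition ceil_div (a b : nat) : nat := (a + b.-1) %/ b.

(* Main.v *)
Require Import Defs.
From mathcomp Require Import all_boot.
From mathcomp Require Import zify.

Definition dist (a b : nat) := (a - b) + (b - a).

Lemma infl_char n (p : 'I_n -> nat) (hp : forall v, p v <= 1) l v :
  (v \in influenced (@path_adj n) (fun _ => 1) p l) =
  [exists u, (p u == 1) && (dist u v <= l)].
Proof.
elim: l v => [|l IH] v /=.
  rewrite inE; apply/eqP/existsP => [H|[u /andP[/eqP Hu Hd]]].
    by exists v; rewrite H eqxx /dist !subnn.
  have -> : v = u by apply: ord_inj; rewrite /dist in Hd; lia.
  by [].
rewrite !inE IH.
have [Hv|Hv] : p v = 0 \/ p v = 1 by have := hp v; lia.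
- rewrite Hv subn0; apply/idP/idP.
  + case/orP => [/existsP[u /andP[Hu Hd]]|].
      by apply/existsP; exists u; rewrite Hu /=; lia.
    rewrite card_gt0 => /set0Pn [w]; rewrite !inE IH => /andP[Hadj /existsP[u /andP[Hu Hd]]].
    apply/existsP; exists u; rewrite Hu /=; move: Hadj Hd; rewrite /path_adj /dist; lia.
  + move=> /existsP[u /andP[Hu Hd]].
    have [Hle|Hgt] := leqP (dist u v) l.
      by apply/orP; left; apply/existsP; exists u; rewrite Hu.
    apply/orP; right; rewrite card_gt0; apply/set0Pn.
    have Huv : u != v :> nat.
      apply/eqP => E; have E2 : u = v by apply: ord_inj.
      by move: Hu; rewrite E2 Hv.
    have [Hlt|Hlt] : (u < v) \/ (v < u) by move: Huv; lia.
    * have Hw : v.-1 < n by have := ltn_ord v; lia.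
      exists (Ordinal Hw); rewrite !inE /path_adj /=; apply/andP; split; first by lia.
      by rewrite IH; apply/existsP; exists u; rewrite Hu /=; move: Hd Hgt; rewrite /dist /=; lia.
    * have Hw : v.+1 < n by have := ltn_ord u; lia.
      exists (Ordinal Hw); rewrite !inE /path_adj /=; apply/andP; split; first by lia.
      by rewrite IH; apply/existsP; exists u; rewrite Hu /=; move: Hd Hgt; rewrite /dist /=; lia.
- rewrite Hv subnn leq0n orbT; symmetry; apply/existsP; exists v.
  by rewrite Hv eqxx /dist subnn.
Qed.

Lemma ball_card {n} (u : 'I_n) lam :
  #|[set v : 'I_n | dist u v <= lam]| <= 2 * lam + 1.
Proof.
set B := [set v : 'I_n | _].
have -> : #|B| = size (map val (enum B)) by rewrite size_map cardE.
rewrite -(size_iota (u - lam) (2 * lam + 1)).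
apply: uniq_leq_size; first by rewrite map_inj_uniq ?enum_uniq //; apply: val_inj.
move=> x /mapP [y]; rewrite mem_enum inE /dist => Hy ->.
rewrite mem_iota -[val y]/(nat_of_ord y); lia.
Qed.

Theorem lemma5 (n lam : nat) : 0 < n -> 0 < lam ->
  let t : 'I_n -> nat := fun _ => 1 in
  (exists p : {ffun 'I_n -> nat},
      TBI_solution (@path_adj n) t lam p /\ cost p = ceil_div n (2 * lam + 1)) /\
  (forall p : {ffun 'I_n -> nat},
      TBI_solution (@path_adj n) t lam p -> ceil_div n (2 * lam + 1) <= cost p).
Proof.
case: n => [//|n'] Hn Hlam t.
set m := 2 * lam + 1.
have Hm : 0 < m by rewrite /m; lia.
set k := ceil_div n'.+1 m.
have Hk : n'.+1 + m.-1 = k * m + (n'.+1 + m.-1) %% m by rewrite /k /ceil_div -divn_eq.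
have Hr : (n'.+1 + m.-1) %% m < m by rewrite ltn_mod.
have Hk1 : n'.+1 <= k * m by lia.
have Hk2 : (k.-1) * m < n'.+1.
  have : k.-1 * m + m = k * m.
    case: (k) Hk1 => [|k'] /=; first by lia.
    by rewrite mulSn addnC.
  lia.
split.
- pose seed (v : 'I_n'.+1) := [exists j : 'I_k, val v == minn (j * m + lam) n'].
  pose p : {ffun 'I_n'.+1 -> nat} := [ffun v => (seed v : nat)].
  have hp : forall v, p v <= 1 by move=> v; rewrite ffunE; case: (seed v).
  exists p; split; first split.
  + by move=> v; apply: hp.
  + apply/setP => v; rewrite inE infl_char //; apply/existsP.
    have Hj : v %/ m < k by rewrite ltn_divLR //; have := ltn_ord v; lia.
    have Hs : minn ((v %/ m) * m + lam) n' < n'.+1 by lia.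
    exists (Ordinal Hs); rewrite ffunE /=; apply/andP; split.
      by rewrite (_ : seed _ = true) //; apply/existsP; exists (Ordinal Hj).
    have Hv := divn_eq v m; have Hv2 : v %% m < m by rewrite ltn_mod.
    have := ltn_ord v; move: Hv Hv2; rewrite /dist /m; lia.
  + pose g (j : 'I_k) : 'I_n'.+1 := inord (minn (j * m + lam) n').
    have ginj : injective g.
      move=> j1 j2 E0; have := congr1 (@nat_of_ord _) E0; rewrite /g !inordK; try lia.
      have H1 : forall a b : 'I_k, a < b -> minn (a * m + lam) n' != minn (b * m + lam) n'.
        move=> a b Hab.
        have Ha : (a.+1) * m <= k.-1 * m by rewrite leq_mul2r; apply/orP; right; have := ltn_ord b; lia.
        have Hb : (a.+1) * m <= b * m by rewrite leq_mul2r; apply/orP; right.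
        move: Ha Hb; rewrite mulSn /m; lia.
      move=> E; apply: ord_inj; case: (ltngtP j1 j2) => // Hlt.
      * by move: (H1 _ _ Hlt); rewrite E eqxx.
      * by move: (H1 _ _ Hlt); rewrite E eqxx.
    have -> : cost p = #|[set v | seed v]|.
      rewrite /cost -sum1_card [RHS]big_mkcond /=; apply: eq_bigr => v _.
      by rewrite ffunE inE; case: (seed v).
    have -> : [set v | seed v] = g @: setT.
      apply/setP => v; rewrite inE; apply/existsP/imsetP.
      * move=> [j /eqP Hj]; exists j => //; apply: ord_inj; rewrite /g inordK; first exact: Hj. lia.
      * move=> [j _ ->]; exists j; rewrite /g /= inordK //; lia.
    by rewrite card_imset // cardsT card_ord.
- move=> p [Hinc Hall].
  have hp : forall v, p v <= 1 by move=> v; apply: Hinc.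
  set S := [set u : 'I_n'.+1 | p u == 1].
  have HS : #|S| <= cost p.
    rewrite /cost -sum1_card big_mkcond /=; apply: leq_sum => i _.
    by rewrite inE; case: eqP => // ->.
  have Hcov : n'.+1 <= #|S| * m.
    have E2 : \sum_(v : 'I_n'.+1) 1 <= \sum_(v : 'I_n'.+1) \sum_(u in S) (dist u v <= lam).
      apply: leq_sum => v _.
      have : v \in influenced (@path_adj n'.+1) t p lam by rewrite Hall inE.
      rewrite infl_char // => /existsP [u /andP [Hu Hd]].
      rewrite (bigD1 u) /=; last by rewrite inE.
      by rewrite Hd; apply: leq_addr.
    apply: (leq_trans _ (leq_trans E2 _)); first by rewrite sum1_card card_ord. rewrite exchange_big /=.
    rewrite -sum_nat_const; apply: leq_sum => u _.
    apply: leq_trans (ball_card u lam).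
    rewrite -sum1_card [X in _ <= X]big_mkcond /=; apply: leq_sum => v _; rewrite inE.
    by case: (dist u v <= lam).
  apply: leq_trans HS.
  have : k * m < #|S|.+1 * m by rewrite mulSn; lia.
  by rewrite ltn_pmul2r.
Qed.
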